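(* On the Lie algebra $\mathfrak{d}_{4,2}$ with basis $e_1,\dots,e_4$, non-zero brackets $[e_1,e_2]=e_3$, $[e_4,e_3]=e_3$, $[e_4,e_1]=2e_1$, $[e_4,e_2]=-e_2$, and orientation $\mu=e^{1234}$, let $J$ be the almost complex structure inducing the orientation $\mu$ whose space of $J$-anti-invariant 2-forms is $\Lambda^-_J=\mathrm{Span}\big((e^{12}+e^{34})+(e^{14}+e^{23}),\ e^{13}-e^{24}\big)$ (explicitly, $Je_1=\tfrac{1}{\sqrt2}(e_2-e_4)$, $Je_2=\tfrac{1}{\sqrt2}(-e_1-e_3)$, $Je_3=\tfrac{1}{\sqrt2}(e_2+e_4)$, $Je_4=\tfrac{1}{\sqrt2}(e_1-e_3)$). Then $J$ is tamed by some symplectic form on $\mathfrak{d}_{4,2}$ but is not compatible with any symplectic form on $\mathfrak{d}_{4,2}$.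
   Context: $e^1,\dots,e^4$ is the dual basis, $e^{ij}=e^i\wedge e^j$, $e^{1234}=e^1\wedge e^2\wedge e^3\wedge e^4$. A 2-form $\alpha$ is $J$-anti-invariant if $\alpha(J\cdot,J\cdot)=-\alpha$. The Chevalley–Eilenberg differential is $d\alpha(u,v)=-\alpha([u,v])$ on 1-forms, extended by Leibniz; a symplectic form is a closed non-degenerate 2-form. $J$ is tamed by $\omega$ if $\omega(u,Ju)>0$ for all $u\neq0$, and compatible with $\omega$ if tamed and $\omega(Jv,Jw)=\omega(v,w)$ for all $v,w$. *)

(* Defs.v *)
From Stdlib Require Import Reals Lra.
Open Scope R_scope.

(* Vectors of d_{4,2}, in coordinates w.r.t. e1,...,e4. *)
Record vec : Type := mkV { c1 : R; c2 : R; c3 : R; c4 : R }.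

Definition vzero : vec := mkV 0 0 0 0.

(* Lie bracket, extended bilinearly from
   [e1,e2]=e3, [e4,e3]=e3, [e4,e1]=2e1, [e4,e2]=-e2. *)
Definition bracket (u v : vec) : vec :=
  mkV (2 * (c4 u * c1 v - c1 u * c4 v))
      (- (c4 u * c2 v - c2 u * c4 v))
      ((c1 u * c2 v - c2 u * c1 v) + (c4 u * c3 v - c3 u * c4 v))
      0.

(* A 2-form alpha = sum_{i<j} a_ij e^{ij}. *)
Record twoform : Type := mkF { a12 : R; a13 : R; a14 : R; a23 : R; a24 : R; a34 : R }.

Definition ev (w : twoform) (u v : vec) : R :=
  a12 w * (c1 u * c2 v - c2 u * c1 v) + a13 w * (c1 u * c3 v - c3 u * c1 v)
+ a14 w * (c1 u * c4 v - c4 u * c1 v) + a23 w * (c2 u * c3 v - c3 u * c2 v)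
+ a24 w * (c2 u * c4 v - c4 u * c2 v) + a34 w * (c3 u * c4 v - c4 u * c3 v).

(* Chevalley-Eilenberg differential of a 2-form:
   dw(x,y,z) = - w([x,y],z) + w([x,z],y) - w([y,z],x). *)
Definition d2 (w : twoform) (x y z : vec) : R :=
  - ev w (bracket x y) z + ev w (bracket x z) y - ev w (bracket y z) x.

Definition closed (w : twoform) : Prop := forall x y z, d2 w x y z = 0.

Definition nondegenerate (w : twoform) : Prop :=
  forall u, u <> vzero -> exists v, ev w u v <> 0.

Definition symplectic (w : twoform) : Prop := closed w /\ nondegenerate w.

(* The almost complex structure J:
   Je1 = (e2 - e4)/sqrt2, Je2 = (-e1 - e3)/sqrt2,
   Je3 = (e2 + e4)/sqrt2, Je4 = (e1 - e3)/sqrt2, extended linearly. *)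
Definition J (u : vec) : vec :=
  mkV ((- c2 u + c4 u) / sqrt 2)
      ((c1 u + c3 u) / sqrt 2)
      ((- c2 u - c4 u) / sqrt 2)
      ((- c1 u + c3 u) / sqrt 2).

Definition tamed (w : twoform) (K : vec -> vec) : Prop :=
  forall u, u <> vzero -> ev w u (K u) > 0.

Definition compatible (w : twoform) (K : vec -> vec) : Prop :=
  tamed w K /\ forall v x, ev w (K v) (K x) = ev w v x.

(* Main.v *)
From Stdlib Require Import Reals Lra Psatz.
Require Import Defs.
Open Scope R_scope.

Definition Js (u : vec) : vec :=
  mkV (- c2 u + c4 u) (c1 u + c3 u) (- c2 u - c4 u) (- c1 u + c3 u).

Lemma s2 : sqrt 2 * sqrt 2 = 2.
Proof. apply sqrt_sqrt; lra. Qed.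
Lemma s2pos : 0 < sqrt 2.
Proof. apply sqrt_lt_R0; lra. Qed.

Lemma evJ1 w u v : ev w u (J v) = / sqrt 2 * ev w u (Js v).
Proof. destruct u, v, w; unfold ev, J, Js; simpl. unfold Rdiv. ring. Qed.

Lemma evJ2 w u v : ev w (J u) (J v) = / 2 * ev w (Js u) (Js v).
Proof.
  destruct u, v, w; unfold ev, J, Js; simpl. unfold Rdiv.
  replace (/2) with (/ sqrt 2 * / sqrt 2).
  ring. rewrite <- Rinv_mult, s2. reflexivity.
Qed.

Definition w0 := mkF (-1) 0 (-3) (-3) 0 1.

Lemma tam_iff w u : ev w u (J u) > 0 <-> ev w u (Js u) > 0.
Proof.
  rewrite evJ1. pose proof s2pos. split; intro H0.
  - apply (Rmult_lt_reg_l (/ sqrt 2)). apply Rinv_0_lt_compat; lra. lra.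
  - apply Rmult_lt_0_compat; [apply Rinv_0_lt_compat|]; lra.
Qed.

Lemma part1 : exists w : twoform, symplectic w /\ tamed w J.
Proof.
  assert (T : tamed w0 J).
  { intros [x1 x2 x3 x4] Hu. apply tam_iff. unfold ev, Js, w0; simpl.
    assert (x1*x1+x2*x2+x3*x3+x4*x4 > 0).
    { destruct (Rle_lt_dec (x1*x1+x2*x2+x3*x3+x4*x4) 0) as [h|h]; [|lra].
      exfalso. apply Hu. unfold vzero. f_equal; nra. }
    pose proof (Rle_0_sqr (x1-x3)); pose proof (Rle_0_sqr (x2+x4)); pose proof (Rle_0_sqr (x1+x3)); pose proof (Rle_0_sqr (x2-x4)); unfold Rsqr in *; nra. }
  exists w0. split; [split|exact T].
  - intros [x1 x2 x3 x4] [y1 y2 y3 y4] [z1 z2 z3 z4]. unfold d2, ev, bracket, w0; simpl. ring.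
  - intros u Hu. exists (J u). specialize (T u Hu). lra.
Qed.

Definition E1 := mkV 1 0 0 0.
Definition E2 := mkV 0 1 0 0.
Definition E3 := mkV 0 0 1 0.
Definition E4 := mkV 0 0 0 1.

Lemma part2 : ~ (exists w : twoform, symplectic w /\ compatible w J).
Proof.
  intros [[b12 b13 b14 b23 b24 b34] [[Hc _] [Ht Hi]]].
  assert (ne1 : E1 <> vzero) by (unfold E1, vzero; intro h; injection h; lra).
  assert (ne2 : E2 <> vzero) by (unfold E2, vzero; intro h; injection h; lra).
  assert (ne3 : E3 <> vzero) by (unfold E3, vzero; intro h; injection h; lra).
  assert (ne4 : E4 <> vzero) by (unfold E4, vzero; intro h; injection h; lra).
  pose proof (proj1 (tam_iff _ _) (Ht _ ne1)) as t1.
  pose proof (proj1 (tam_iff _ _) (Ht _ ne2)) as t2.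
  pose proof (proj1 (tam_iff _ _) (Ht _ ne3)) as t3.
  pose proof (proj1 (tam_iff _ _) (Ht _ ne4)) as t4.
  pose proof (Hi E1 E2) as i12. pose proof (Hi E1 E3) as i13.
  pose proof (Hi E1 E4) as i14. pose proof (Hi E2 E3) as i23.
  pose proof (Hi E2 E4) as i24. pose proof (Hi E3 E4) as i34.
  rewrite evJ2 in i12, i13, i14, i23, i24, i34.
  pose proof (Hc E1 E2 E4) as c124. pose proof (Hc E1 E3 E4) as c134.
  pose proof (Hc E1 E2 E3) as c123. pose proof (Hc E2 E3 E4) as c234.
  unfold E1, E2, E3, E4, d2, ev, bracket, Js in *; simpl in *.
  lra.
Qed.

Theorem mainTheorem4 :
  (exists w : twoform, symplectic w /\ tamed w J) /\
  ~ (exists w : twoform, symplectic w /\ compatible w J).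
Proof. split; [exact part1 | exact part2]. Qed.
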